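(* Let $k$ be an $\mathbf{F}_p$-algebra, $m\in\mathbf{N}\cup\{\infty\}$, $O_m:=\mathbf{F}_p[[\pi]]/(\pi^{m+1})$ and $A:=k[[\pi]]/(\pi^{m+1})$. Let $\iota:\operatorname{HS}^m(k)\to\operatorname{HS}^m(A)$ be induced by the inclusion $k\subset A$, let $J\subset\operatorname{HS}^m(A)$ be the ideal generated by $d^{[n]}\pi^i-\delta_{ni}$ for all $0\le n\le m$ and $i\ge0$, and let $\rho:\operatorname{HS}^m(k)\to\operatorname{HS}^m(A)/J$ be the composite of $\iota$ with the quotient map. Then $\iota$ is injective, $\rho$ is surjective, and there are mutually inverse ring isomorphisms between $\operatorname{HS}^m(A)\otimes_{\operatorname{HS}^m(O_m)}\mathbf{F}_p$ and $\operatorname{HS}^m(A)/J$ compatible with the natural maps from $\operatorname{HS}^m(A)$ to each.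
   Context: For a ring $R$ and $m\in\mathbf{N}\cup\{\infty\}$, $\operatorname{HS}^m(R):=\mathbf{Z}[d^{[n]}a\mid a\in R,0\le n\le m]/\sim$, where $\sim$ is generated by $d^{[n]}(a+b)=d^{[n]}a+d^{[n]}b$, $d^{[n]}(ab)=\sum_{i+j=n}d^{[i]}a\,d^{[j]}b$, and $d^{[0]}1=1$; it is functorial in $R$ via $d^{[n]}a\mapsto d^{[n]}f(a)$. Here $\pi^{\infty+1}:=0$. The map $O_m\to A$ is the inclusion of coefficients $\mathbf{F}_p\subset k$, giving $\operatorname{HS}^m(O_m)\to\operatorname{HS}^m(A)$, and $\operatorname{HS}^m(O_m)\to\mathbf{F}_p$ is the ring homomorphism $d^{[n]}a\mapsto a_n$, where $a=\sum_ia_i\pi^i$ with $a_i\in\mathbf{F}_p$. $\delta_{ni}$ is the Kronecker delta. *)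

(* Defs.v *)
From HB Require Import structures.
From mathcomp Require Import all_boot all_algebra.
From mathcomp Require Import generic_quotient ring_quotient.
From mathcomp Require Import boolp.
From mathcomp Require Import finmap.
From mathcomp.multinomials Require Import monalg.
Set Implicit Arguments. Unset Strict Implicit. Unset Printing Implicit Defensive.
Import GRing.Theory.
Local Open Scope ring_scope.
Local Open Scope quotient_scope.

Definition is_ideal (R : comPzRingType) (I : R -> Prop) : Prop :=
  [/\ I 0, (forall x y, I x -> I y -> I (x + y)) & (forall a x, I x -> I (a * x))].

Definition ideal_gen (R : comPzRingType) (S : R -> Prop) : R -> Prop :=
  fun x => forall I : R -> Prop, is_ideal I -> (forall s, S s -> I s) -> I x.

Section QuotBy.
Variables (R : comPzRingType) (S : R -> Prop).
Definition ideal_pred : {pred R} := fun x => `[< ideal_gen S x >].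
Lemma ideal_pred_zmod : zmod_closed ideal_pred.
Proof.
split=> [|x y]; rewrite /ideal_pred /in_mem /=.
  by apply/asboolP => I [] .
move=> /asboolP hx /asboolP hy; apply/asboolP => I hI hS.
case: (hI) => _ hD hM; rewrite -mulN1r mulrC; apply: hD; first exact: hx.
by rewrite mulrC; apply: hM; exact: hy.
Qed.
HB.instance Definition _ := GRing.isZmodClosed.Build R ideal_pred ideal_pred_zmod.
Definition quot_by := Quotient.quot ideal_pred.
HB.instance Definition _ := GRing.Zmodule.on quot_by.
Definition qone : quot_by := lift_cst quot_by 1.
Definition qmul := lift_op2 quot_by *%R.
Canonical pi_qone_morph := PiConst qone.
Lemma ideal_predM a x : x \in ideal_pred -> a * x \in ideal_pred.
Proof.
rewrite /ideal_pred /in_mem /= => /asboolP hx; apply/asboolP => I hI hS.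
by case: (hI) => _ _ hM; apply: hM; exact: hx.
Qed.
Lemma pi_qmul : {morph \pi_quot_by : x y / x * y >-> qmul x y}.
Proof.
move=> x y; unlock qmul; apply/eqP; rewrite piE Quotient.equivE.
rewrite -[_ * _](addrNK (x * repr (\pi_quot_by y))) -mulrBr.
rewrite -addrA -mulrBl rpredD //.
  by rewrite ideal_predM // Quotient.idealrDE opprK reprK.
by rewrite mulrC ideal_predM // Quotient.idealrDE opprK reprK.
Qed.
Canonical pi_qmul_morph := PiMorph2 pi_qmul.
Lemma qmulA : associative qmul.
Proof. by move=> x y z; rewrite -[x]reprK -[y]reprK -[z]reprK !piE mulrA. Qed.
Lemma qmulC : commutative qmul.
Proof. by move=> x y; rewrite -[x]reprK -[y]reprK !piE mulrC. Qed.
Lemma qmul1 : left_id qone qmul.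
Proof. by move=> x; rewrite -[x]reprK !piE mul1r. Qed.
Lemma qmulDl : left_distributive qmul +%R.
Proof.
move=> x y z; rewrite -[x]reprK -[y]reprK -[z]reprK.
by rewrite !piE mulrDl.
Qed.
HB.instance Definition _ := GRing.Zmodule_isComPzRing.Build quot_by
  qmulA qmulC qmul1 qmulDl.
Definition quot_pi : R -> quot_by := \pi_quot_by.
End QuotBy.

(* ---------- m in N ∪ {∞} as option nat (None = ∞) ---------- *)
Definition le_m (m : option nat) (n : nat) : bool :=
  if m is Some m' then (n <= m')%N else true.

(* ---------- truncated power series R[[pi]]/(pi^(m+1)) ---------- *)
Record tps (R : comPzRingType) (m : option nat) := TPS {
  tps_coef : nat -> R;
  _ : forall n, ~~ le_m m n -> tps_coef n = 0 }.
Arguments tps_coef {R m}.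

Section TPS.
Variables (R : comPzRingType) (m : option nat).
HB.instance Definition _ := gen_eqMixin (tps R m).
HB.instance Definition _ := gen_choiceMixin (tps R m).
Lemma trunc_subproof (f : nat -> R) n :
  ~~ le_m m n -> (if le_m m n then f n else 0) = 0.
Proof. by move/negPf ->. Qed.
Definition trunc (f : nat -> R) : tps R m :=
  @TPS R m (fun n => if le_m m n then f n else 0) (trunc_subproof f).
Definition tps_add (a b : tps R m) : tps R m :=
  trunc (fun n => tps_coef a n + tps_coef b n).
Definition tps_mul (a b : tps R m) : tps R m :=
  trunc (fun n => \sum_(i < n.+1) tps_coef a i * tps_coef b (n - i)).
Definition tps_one : tps R m := trunc (fun n => (n == 0%N)%:R).
Definition tps_const (c : R) : tps R m := trunc (fun n => if n == 0%N then c else 0).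
Definition tps_pi : tps R m := trunc (fun n => (n == 1%N)%:R).
Definition tps_exp (a : tps R m) (i : nat) : tps R m := iter i (tps_mul a) tps_one.
End TPS.

Definition zpoly (I : choiceType) := {malg int[{cmonom I}]}.
Definition zX (I : choiceType) (i : I) : zpoly I := << ucm i >>.
Definition peval (I : choiceType) (S : comPzRingType) (v : I -> S) (q : zpoly I) : S :=
  \sum_(k <- msupp q) (q@_k)%:~R * \prod_(i <- finsupp k) v i ^+ (k i).

Section HSdef.
Variables (T : choiceType) (add mul : T -> T -> T) (one : T) (m : option nat).
Definition hsidx := {x : T * nat | le_m m x.2}.
Definition hs_d (a : T) (n : nat) : zpoly hsidx :=
  if @insub _ (fun x : T * nat => le_m m x.2) hsidx (a, n) is Some i then zX i else 0.
Definition hs_rel (x : zpoly hsidx) : Prop :=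
  [\/ exists a b n, le_m m n /\ x = hs_d (add a b) n - (hs_d a n + hs_d b n),
      exists a b n, le_m m n /\
        x = hs_d (mul a b) n - \sum_(i < n.+1) hs_d a i * hs_d b (n - i)
    | x = hs_d one 0 - 1].
Definition HS : comPzRingType := quot_by hs_rel.
Definition hs_dd (a : T) (n : nat) : HS := quot_pi hs_rel (hs_d a n).
End HSdef.

Definition hs_map (T : choiceType) (add mul : T -> T -> T) (one : T)
  (T' : choiceType) (add' mul' : T' -> T' -> T') (one' : T') (m : option nat)
  (f : T -> T') (x : HS add mul one m) : HS add' mul' one' m :=
  quot_pi _ (peval (fun i : hsidx T m => @hs_d T' m (f (val i).1) (val i).2) (repr x)).

Section Prop62.
Variables (p : nat) (k : comPzRingType) (m : option nat).

Definition Aring := tps k m.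
Definition Oring := tps 'F_p m.
Definition HSk : comPzRingType := HS +%R *%R (1 : k) m.
Definition HSA : comPzRingType := HS (@tps_add k m) (@tps_mul k m) (@tps_one k m) m.
Definition HSO : comPzRingType :=
  HS (@tps_add 'F_p m) (@tps_mul 'F_p m) (@tps_one 'F_p m) m.

Definition hs_iota : HSk -> HSA :=
  @hs_map k +%R *%R 1 Aring (@tps_add k m) (@tps_mul k m) (@tps_one k m) m
    (@tps_const k m).

Definition Fp_to_k (x : 'F_p) : k := (nat_of_ord x)%:R.
Definition O_to_A (a : Oring) : Aring := trunc m (fun n => Fp_to_k (tps_coef a n)).
Definition HSO_to_HSA : HSO -> HSA :=
  @hs_map Oring (@tps_add 'F_p m) (@tps_mul 'F_p m) (@tps_one 'F_p m)
    Aring (@tps_add k m) (@tps_mul k m) (@tps_one k m) m O_to_A.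

Definition HSO_aug (x : HSO) : 'F_p :=
  peval (fun i : hsidx Oring m => tps_coef (val i).1 (val i).2) (repr x).

Definition Jgen (y : HSA) : Prop :=
  exists n i : nat, le_m m n /\
    y = hs_dd (@tps_add k m) (@tps_mul k m) (@tps_one k m) m
              (tps_exp (tps_pi k m) i) n - (n == i)%:R.
Definition HSAJ : comPzRingType := quot_by Jgen.
Definition qJ : HSA -> HSAJ := quot_pi Jgen.
Definition hs_rho (x : HSk) : HSAJ := qJ (hs_iota x).
End Prop62.
Arguments hs_iota : clear implicits.
Arguments hs_rho : clear implicits.
Arguments HSO_aug : clear implicits.
Arguments HSO_to_HSA : clear implicits.
Arguments qJ : clear implicits.
Arguments Jgen : clear implicits.
Arguments Fp_to_k : clear implicits.
Arguments O_to_A : clear implicits.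

(* (T, u, v) is a pushout of B <-f- C -g-> D in commutative rings, i.e.
   T = B ⊗_C D with its natural maps *)
Definition is_pushout (C B D : comPzRingType) (f : C -> B) (g : C -> D)
  (T : comPzRingType) (u : {rmorphism B -> T}) (v : {rmorphism D -> T}) : Prop :=
  (forall c, u (f c) = v (g c)) /\
  forall (S : comPzRingType) (u' : {rmorphism B -> S}) (v' : {rmorphism D -> S}),
    (forall c, u' (f c) = v' (g c)) ->
    exists h : {rmorphism T -> S},
      [/\ forall b, h (u b) = u' b, forall d, h (v d) = v' d &
          forall h' : {rmorphism T -> S},
            (forall b, h' (u b) = u' b) -> (forall d, h' (v d) = v' d) ->
            forall t, h' t = h t].

(* Main.v *)
From HB Require Import structures.
Require Import Defs.
From mathcomp Require Import all_boot all_algebra.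
From mathcomp Require Import generic_quotient ring_quotient boolp finmap.
From mathcomp.multinomials Require Import monalg.
Set Implicit Arguments. Unset Strict Implicit. Unset Printing Implicit Defensive.
Import GRing.Theory.
Local Open Scope ring_scope.
Local Open Scope quotient_scope.
Local Open Scope fset_scope.
Local Open Scope ring_scope.


Section Q.
Variables (R : comPzRingType) (S : R -> Prop).
Local Notation Q := (quot_by S).
Local Notation qp := (quot_pi S).

Lemma qpD x y : qp (x + y) = qp x + qp y.
Proof. by rewrite /quot_pi [RHS]piE. Qed.
Lemma qpN x : qp (- x) = - qp x.
Proof. by rewrite /quot_pi [RHS]piE. Qed.
Lemma qpM x y : qp (x * y) = qp x * qp y.
Proof. by rewrite /quot_pi [RHS]piE. Qed.
Lemma qp1 : qp 1 = 1.
Proof. by rewrite /quot_pi [RHS]piE. Qed.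
Lemma qp0 : qp 0 = 0.
Proof. by rewrite /quot_pi [RHS]piE. Qed.
Lemma qpK y : qp (repr y) = y.
Proof. exact: reprK. Qed.
Lemma qp_eq0 x : (qp x = 0) <-> (x \in ideal_pred S).
Proof.
rewrite -qp0 /quot_pi; split.
  by move/eqP; rewrite eqmodE /= Quotient.equivE subr0.
by move=> h; apply/eqP; rewrite eqmodE /= Quotient.equivE subr0.
Qed.
Lemma qp_gen s : S s -> qp s = 0.
Proof.
move=> hs; apply/qp_eq0; rewrite /ideal_pred /in_mem /=; apply/asboolP.
by move=> I _; apply.
Qed.
Lemma repr_qp x : repr (qp x) - x \in ideal_pred S.
Proof. by apply/qp_eq0; rewrite qpD qpN qpK subrr. Qed.
End Q.

Section Kill.
Variables (R T : comPzRingType) (S : R -> Prop) (f : R -> T).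
Hypotheses (fD : forall x y, f (x + y) = f x + f y)
  (fM : forall a x, f (a * x) = f a * f x) (hS : forall s, S s -> f s = 0).

Lemma f0 : f 0 = 0.
Proof. by apply: (@addrI _ (f 0)); rewrite -fD !addr0. Qed.
Lemma fN x : f (- x) = - f x.
Proof. by apply: (@addrI _ (f x)); rewrite -fD !subrr f0. Qed.

Lemma ideal_kill x : x \in ideal_pred S -> f x = 0.
Proof.
rewrite /ideal_pred /in_mem /= => /asboolP h; apply: h hS.
by split; [exact: f0 | move=> a b ha hb; rewrite fD ha hb addr0 | move=> a y hy; rewrite fM hy mulr0].
Qed.

Lemma repr_kill x : f (repr (quot_pi S x)) = f x.
Proof.
have := ideal_kill (repr_qp S x); rewrite fD fN => /eqP; rewrite subr_eq0 => /eqP.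
done.
Qed.
End Kill.

Definition mkrm (R T : comPzRingType) (f : R -> T) (fB : zmod_morphism f)
  (fm : monoid_morphism f) : {rmorphism R -> T} :=
  HB.pack f (GRing.isZmodMorphism.Build _ _ f fB) (GRing.isMonoidMorphism.Build _ _ f fm).

Lemma mkrmE (R T : comPzRingType) (f : R -> T) fB fm x : @mkrm R T f fB fm x = f x.
Proof. by []. Qed.

Section Peval.
Variables (I : choiceType) (S : comPzRingType) (v : I -> S).

Definition hmon (k : cmonom I) : S := \prod_(i <- finsupp k) v i ^+ k i.

Lemma hmonEw (d : {fset I}) (k : cmonom I) : finsupp k `<=` d -> hmon k = \prod_(i <- d) v i ^+ k i.
Proof.
move=> le; rewrite /hmon (big_fset_incl _ le) //.
by move=> i _; rewrite -cmE_neq0 negbK => /eqP ->; rewrite expr0.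
Qed.

Lemma hmonM (k1 k2 : cmonom I) : hmon (mmul k1 k2) = hmon k1 * hmon k2.
Proof.
rewrite (@hmonEw (finsupp k1 `|` finsupp k2) (mmul k1 k2)); last by rewrite mdomD.
rewrite (hmonEw (fsubsetUl _ (finsupp k2))) (hmonEw (fsubsetUr (finsupp k1) _)).
by rewrite -big_split /=; apply: eq_bigr => i _; rewrite cmM exprD.
Qed.

Lemma hmon1 : hmon mone = 1.
Proof. by rewrite /hmon mdom1 big_seq_fset0. Qed.

Lemma hmonU i : hmon (ucm i) = v i.
Proof. by rewrite /hmon mdomU big_seq_fset1 cmUU expr1. Qed.

Lemma pevalEw (d : {fset cmonom I}) (q : zpoly I) : msupp q `<=` d ->
  peval v q = \sum_(k <- d) (q@_k)%:~R * hmon k.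
Proof.
move=> le; rewrite /peval (big_fset_incl _ le) //.
by move=> k _ /mcoeff_outdom ->; rewrite mul0r.
Qed.

Lemma pevalU (c : int) (k : cmonom I) : peval v << c *g k >> = c%:~R * hmon k.
Proof. by rewrite (pevalEw msuppU_le) big_seq_fset1 mcoeffUU. Qed.

Lemma pevalD (q1 q2 : zpoly I) : peval v (q1 + q2) = peval v q1 + peval v q2.
Proof.
have le := msuppD_le q1 q2.
rewrite (pevalEw le) (pevalEw (fsubsetUl _ (msupp q2))) (pevalEw (fsubsetUr (msupp q1) _)).
by rewrite -big_split /=; apply: eq_bigr => k _; rewrite mcoeffD intrD mulrDl.
Qed.

Lemma peval0 : peval v 0 = 0.
Proof. by rewrite /peval msupp0 big_seq_fset0. Qed.

Lemma pevalN (q : zpoly I) : peval v (- q) = - peval v q.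
Proof. by apply: (@addrI _ (peval v q)); rewrite -pevalD !subrr peval0. Qed.

Lemma pevalB (q1 q2 : zpoly I) : peval v (q1 - q2) = peval v q1 - peval v q2.
Proof. by rewrite pevalD pevalN. Qed.

Lemma peval_sum (J : Type) (r : seq J) (P : pred J) (F : J -> zpoly I) :
  peval v (\sum_(j <- r | P j) F j) = \sum_(j <- r | P j) peval v (F j).
Proof. exact: (big_morph _ pevalD peval0). Qed.

Lemma pevalM (q1 q2 : zpoly I) : peval v (q1 * q2) = peval v q1 * peval v q2.
Proof.
rewrite malgME peval_sum [peval v q1]/peval big_distrl /=; apply: eq_bigr => k1 _.
rewrite peval_sum [peval v q2]/peval big_distrr /=; apply: eq_bigr => k2 _.
by rewrite pevalU intrM hmonM mulrACA.
Qed.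

Lemma peval1 : peval v 1 = 1.
Proof. by rewrite -[1]/(<< (mone : cmonom I) >> : zpoly I) pevalU hmon1 mulr1. Qed.

Lemma peval_zX i : peval v (zX i) = v i.
Proof. by rewrite /zX pevalU hmonU mul1r. Qed.

End Peval.

Lemma eq_peval (I : choiceType) (S : comPzRingType) (v1 v2 : I -> S) q :
  v1 =1 v2 -> peval v1 q = peval v2 q.
Proof.
move=> e; apply: eq_bigr => k _; congr (_ * _); apply: eq_bigr => i _.
by rewrite e.
Qed.

Lemma peval_rmorph (I : choiceType) (S T : comPzRingType) (g : {rmorphism S -> T})
  (v : I -> S) q : g (peval v q) = peval (fun i => g (v i)) q.
Proof.
rewrite /peval rmorph_sum; apply: eq_bigr => k _.
by rewrite rmorphM rmorph_int rmorph_prod; congr (_ * _); apply: eq_bigr => i _;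
  rewrite rmorphXn.
Qed.

Lemma peval_comp (I : choiceType) (S T : comPzRingType) (g : S -> T)
  (gD : forall x y, g (x + y) = g x + g y) (gM : forall x y, g (x * y) = g x * g y)
  (g1 : g 1 = 1) (v : I -> S) q : g (peval v q) = peval (fun i => g (v i)) q.
Proof.
have gB : zmod_morphism g.
  move=> x y; have g0 : g 0 = 0 by apply: (@addrI _ (g 0)); rewrite -gD !addr0.
  have gN z : g (- z) = - g z by apply: (@addrI _ (g z)); rewrite -gD !subrr g0.
  by rewrite gD gN.
exact: (peval_rmorph (mkrm gB (g1, gM))).
Qed.


Section PevalId.
Variable I : choiceType.

Lemma monU_prod (J : Type) (s : seq J) (P : pred J) (F : J -> cmonom I) :
  \prod_(i <- s | P i) (<< F i >> : zpoly I) = << \big[mmul/mone]_(i <- s | P i) F i >>.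
Proof.
apply: (big_rec2 (fun a b => a = << b >>)); first by rewrite mpolyC1E.
move=> i a b _ ->; rewrite malgM_def fgmulUU (mulr1 (1:int)). congr (mkmalgU _ _).
Qed.

Lemma expr_prod (R : pzSemiRingType) (x : R) n : x ^+ n = \prod_(j < n) x.
Proof. by elim: n => [|n IH]; rewrite ?big_ord0 // big_ord_recl exprS IH. Qed.

Lemma cmonom_decomp (k : cmonom I) :
  \big[mmul/mone]_(i <- finsupp k) \big[mmul/mone]_(j < k i) ucm i = k.
Proof.
apply/eqP/cmP => x.
have ev (J : Type) (r : seq J) (F : J -> cmonom I) :
    (\big[mmul/mone]_(j <- r) F j) x = (\sum_(j <- r) F j x)%N.
  by elim: r => [|j r IH]; rewrite ?big_nil ?cm1 // !big_cons cmM IH.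
rewrite ev.
under eq_bigr => i _ do rewrite ev.
under eq_bigr => i _ do under eq_bigr => j _ do rewrite cmU.
under eq_bigr => i _ do rewrite big_const_ord iter_addn_0.
case: (mdomP k x) => hx.
  rewrite (big_fsetD1 x) //= eqxx mul1n big_seq big1 ?addn0 // => i.
  by rewrite in_fsetD1 => /andP [/negbTE]; rewrite eq_sym => ->.
rewrite big_seq big1 // => i hi; case: eqP => [ei|//]; by move: hx; rewrite -ei hi.
Qed.


Lemma hmon_zX (k : cmonom I) : hmon (@zX I) k = << k >>.
Proof.
rewrite /hmon /zX.
under eq_bigr => i _ do rewrite expr_prod monU_prod.
rewrite monU_prod cmonom_decomp. reflexivity.
Qed.

Lemma peval_id (q : zpoly I) : peval (@zX I) q = q.
Proof.
rewrite [RHS]monalgE /peval; apply: eq_bigr => k _.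
rewrite -/(hmon _ k) hmon_zX mulrzl -raddfMz. congr (mkmalgU _ _). exact: intz.
Qed.
End PevalId.

Local Close Scope fset_scope.

Lemma le_m0 m : le_m m 0.
Proof. by case: m. Qed.

Lemma le_m_trans m n i : le_m m n -> (i <= n)%N -> le_m m i.
Proof. by case: m => //= m' h1 h2; apply: leq_trans h2 h1. Qed.

Section HSL.
Variables (T : choiceType) (add mul : T -> T -> T) (one : T) (m : option nat).
Local Notation HSr := (HS add mul one m).
Local Notation dd := (hs_dd add mul one m).
Local Notation rel := (@hs_rel T add mul one m).

Lemma hs_d_val (i : hsidx T m) : @hs_d T m (val i).1 (val i).2 = zX i.
Proof. by rewrite /hs_d -surjective_pairing valK. Qed.

Lemma peval_hs_d (S : comPzRingType) (w : T -> nat -> S) a n :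
  peval (fun i : hsidx T m => w (val i).1 (val i).2) (@hs_d T m a n)
  = if le_m m n then w a n else 0.
Proof.
rewrite /hs_d; case: insubP => [i h e|h].
  by rewrite peval_zX e /=; move: h => /= ->.
by rewrite peval0; move: h => /= /negbTE ->.
Qed.

Lemma dd_out a n : ~~ le_m m n -> dd a n = 0.
Proof. by move=> h; rewrite /hs_dd /hs_d insubF ?qp0 //; apply/negbTE. Qed.

Lemma ddD a b n : le_m m n -> dd (add a b) n = dd a n + dd b n.
Proof.
move=> h; have := @qp_gen _ rel (@hs_d T m (add a b) n - (@hs_d T m a n + @hs_d T m b n)).
rewrite qpD qpN qpD => H; apply/eqP; rewrite -subr_eq0; apply/eqP; apply: H.
by apply: Or31; exists a, b, n.
Qed.

Lemma ddM a b n : le_m m n ->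
  dd (mul a b) n = \sum_(i < n.+1) dd a i * dd b (n - i).
Proof.
move=> h; have := @qp_gen _ rel (@hs_d T m (mul a b) n - \sum_(i < n.+1) @hs_d T m a i * @hs_d T m b (n - i)).
rewrite qpD qpN (big_morph _ (@qpD _ rel) (@qp0 _ rel)).
under eq_bigr => i _ do rewrite qpM.
move=> H; apply/eqP; rewrite -subr_eq0; apply/eqP; apply: H.
by apply: Or32; exists a, b, n.
Qed.

Lemma dd1 : dd one 0 = 1.
Proof.
have := @qp_gen _ rel (@hs_d T m one 0 - 1).
rewrite qpD qpN qp1 => H; apply/eqP; rewrite -subr_eq0; apply/eqP; apply: H.
exact: Or33.
Qed.

Section Lift.
Variables (S : comPzRingType) (w : T -> nat -> S).
Hypotheses (wD : forall a b n, le_m m n -> w (add a b) n = w a n + w b n)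
  (wM : forall a b n, le_m m n -> w (mul a b) n = \sum_(i < n.+1) w a i * w b (n - i))
  (w1 : w one 0 = 1).
Local Notation W := (fun i : hsidx T m => w (val i).1 (val i).2).

Lemma W_kill s : rel s -> peval W s = 0.
Proof.
case=> [[a [b [n [h ->]]]]|[a [b [n [h ->]]]]|->].
- by rewrite pevalB pevalD !peval_hs_d h wD // subrr.
- rewrite pevalB peval_sum peval_hs_d h wM //.
  apply/eqP; rewrite subr_eq0; apply/eqP; apply: eq_bigr => i _.
  rewrite pevalM !peval_hs_d (le_m_trans h (ltnSE (ltn_ord i))).
  by rewrite (le_m_trans h (leq_subr i n)).
- by rewrite pevalB peval1 peval_hs_d le_m0 w1 subrr.
Qed.

Definition hlift (x : HSr) : S := peval W (repr x).

Lemma hlift_pi q : hlift (quot_pi rel q) = peval W q.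
Proof. exact: (repr_kill (@pevalD _ _ _) (@pevalM _ _ _) W_kill). Qed.

Lemma hliftD x y : hlift (x + y) = hlift x + hlift y.
Proof. by rewrite -[x]qpK -[y]qpK -qpD !hlift_pi pevalD. Qed.
Lemma hliftM x y : hlift (x * y) = hlift x * hlift y.
Proof. by rewrite -[x]qpK -[y]qpK -qpM !hlift_pi pevalM. Qed.
Lemma hlift1 : hlift 1 = 1.
Proof. by rewrite -qp1 hlift_pi peval1. Qed.
Lemma hlift_dd a n : hlift (dd a n) = if le_m m n then w a n else 0.
Proof. by rewrite /hs_dd hlift_pi peval_hs_d. Qed.
End Lift.
End HSL.

Section Map.
Variables (T T' : choiceType) (add mul : T -> T -> T) (one : T)
  (add' mul' : T' -> T' -> T') (one' : T') (m : option nat) (f : T -> T').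
Hypotheses (fD : forall a b, f (add a b) = add' (f a) (f b))
  (fM : forall a b, f (mul a b) = mul' (f a) (f b)) (f1 : f one = one').
Definition wmap a n := hs_dd add' mul' one' m (f a) n.
Local Notation w := wmap.
Local Notation hm := (@hs_map T add mul one T' add' mul' one' m f).

Lemma wmD a b n : le_m m n -> w (add a b) n = w a n + w b n.
Proof. by move=> h; rewrite /wmap fD ddD. Qed.
Lemma wmM a b n : le_m m n -> w (mul a b) n = \sum_(i < n.+1) w a i * w b (n - i).
Proof. by move=> h; rewrite /wmap fM ddM. Qed.
Lemma wm1 : w one 0 = 1.
Proof. by rewrite /wmap f1 dd1. Qed.

Lemma hs_mapE x : hm x = hlift w x.
Proof.
rewrite /hs_map /hlift (peval_comp (@qpD _ _) (@qpM _ _) (@qp1 _ _)).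
by apply: eq_peval.
Qed.

Lemma hs_mapD x y : hm (x + y) = hm x + hm y.
Proof. by rewrite !hs_mapE (hliftD wmD wmM wm1). Qed.
Lemma hs_mapM x y : hm (x * y) = hm x * hm y.
Proof. by rewrite !hs_mapE (hliftM wmD wmM wm1). Qed.
Lemma hs_map1 : hm 1 = 1.
Proof. by rewrite !hs_mapE (hlift1 wmD wmM wm1). Qed.
Lemma hs_map_dd a n : hm (hs_dd add mul one m a n) =
  if le_m m n then hs_dd add' mul' one' m (f a) n else 0.
Proof. by rewrite !hs_mapE (hlift_dd wmD wmM wm1). Qed.
Lemma hs_map_pi q : hm (quot_pi _ q) =
  peval (fun i : hsidx T m => hs_dd add' mul' one' m (f (val i).1) (val i).2) q.
Proof. by rewrite !hs_mapE (hlift_pi wmD wmM wm1). Qed.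
End Map.

Local Close Scope fset_scope.

Section Fp.
Variables (p : nat) (R : comPzRingType).
Hypotheses (pp : prime p) (pR : p%:R = 0 :> R).
Definition fpr (x : 'F_p) : R := (nat_of_ord x)%:R.

Lemma natr_modp n : (n %% p)%:R = n%:R :> R.
Proof. by rewrite {2}(divn_eq n p) natrD natrM pR mulr0 add0r. Qed.

Lemma fpr_nat n : fpr (n%:R) = n%:R.
Proof. by rewrite /fpr val_Fp_nat // natr_modp. Qed.

Lemma fprD x y : fpr (x + y) = fpr x + fpr y.
Proof. by rewrite -[x]natr_Zp -[y]natr_Zp -natrD !fpr_nat natrD. Qed.
Lemma fprM x y : fpr (x * y) = fpr x * fpr y.
Proof. by rewrite -[x]natr_Zp -[y]natr_Zp -natrM !fpr_nat natrM. Qed.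
Lemma fpr1 : fpr 1 = 1.
Proof. by rewrite -[1]/(1%:R : 'F_p) fpr_nat. Qed.
Lemma fprB : zmod_morphism fpr.
Proof.
move=> x y; have h : fpr (x - y) + fpr y = fpr x by rewrite -fprD subrK.
by rewrite -h addrK.
Qed.
Definition fprm : {rmorphism 'F_p -> R} := mkrm fprB (fpr1, fprM).
End Fp.

Lemma bump0 i : bump 0 i = i.+1.
Proof. by rewrite /bump leq0n add1n. Qed.

Section TPSL.
Variables (R : comPzRingType) (m : option nat).
Local Notation A := (tps R m).
Local Notation cf := (@tps_coef R m).

Lemma tps_ext (a b : A) : (forall n, le_m m n -> cf a n = cf b n) -> a = b.
Proof.
case: a b => [fa ha] [fb hb] /= e.
have efg : fa = fb.
  apply: funext => n; case h: (le_m m n); first exact: e.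
  by rewrite ha ?hb ?h.
subst fb; congr TPS; exact: Prop_irrelevance.
Qed.

Lemma cf_out (a : A) n : ~~ le_m m n -> cf a n = 0.
Proof. by case: a => f h /= /h. Qed.

Lemma cf_add (a b : A) n : le_m m n -> cf (tps_add a b) n = cf a n + cf b n.
Proof. by move=> h; rewrite /= h. Qed.
Lemma cf_mul (a b : A) n : le_m m n ->
  cf (tps_mul a b) n = \sum_(i < n.+1) cf a i * cf b (n - i).
Proof. by move=> h; rewrite /= h. Qed.
Lemma cf_one n : le_m m n -> cf (tps_one R m) n = (n == 0)%:R.
Proof. by move=> h; rewrite /= h. Qed.
Lemma cf_const (c : R) n : le_m m n -> cf (tps_const m c) n = if n == 0 then c else 0.
Proof. by move=> h; rewrite /= h. Qed.
Lemma cf_pi n : le_m m n -> cf (tps_pi R m) n = (n == 1)%:R.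
Proof. by move=> h; rewrite /= h. Qed.
Lemma cf_trunc (f : nat -> R) n : le_m m n -> cf (trunc m f) n = f n.
Proof. by move=> h; rewrite /= h. Qed.

Arguments tps_coef : simpl never.

Lemma constD (a b : R) : tps_const m (a + b) = tps_add (tps_const m a) (tps_const m b).
Proof.
apply: tps_ext => n h; rewrite cf_add // !cf_const //.
by case: (n == 0); rewrite ?addr0.
Qed.

Lemma constM (a b : R) : tps_const m (a * b) = tps_mul (tps_const m a) (tps_const m b).
Proof.
apply: tps_ext => n h; rewrite cf_mul // cf_const // big_ord_recl big1 => [|i _].
  rewrite addr0 cf_const ?le_m0 // cf_const ?subn0 //.
  by case: (n == 0); rewrite ?mulr0.
by rewrite cf_const ?(le_m_trans h (ltn_ord _)) //= mul0r.
Qed.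

Lemma const1 : tps_const m 1 = tps_one R m.
Proof. by apply: tps_ext => n h; rewrite cf_const // cf_one //; case: (n == 0). Qed.

Lemma mul_one (a : A) : tps_mul a (tps_one R m) = a.
Proof.
apply: tps_ext => n h; rewrite cf_mul // big_ord_recr big1 => [|i _].
  by rewrite /= add0r subnn cf_one ?le_m0 // mulr1.
rewrite cf_one ?(le_m_trans h (leq_subr _ _)) //=.
by rewrite subn_eq0 leqNgt ltn_ord mulr0.
Qed.

Definition tshift (a : A) : A := trunc m (fun j => cf a j.+1).

Lemma tps_decomp (a : A) :
  a = tps_add (tps_const m (cf a 0)) (tps_mul (tps_pi R m) (tshift a)).
Proof.
apply: tps_ext => n h; rewrite cf_add // cf_const // cf_mul //.
case: n h => [|n] h.
  by rewrite big_ord1 cf_pi //= mul0r addr0.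
rewrite big_ord_recl /= cf_pi ?le_m0 //= mul0r !add0r.
rewrite big_ord_recl big1 /= => [|i _].
  rewrite !bump0 subSS subn0 cf_pi ?(le_m_trans h (isT : (1 <= n.+1)%N)) //= mul1r addr0.
  by rewrite cf_trunc // (le_m_trans h (leqnSn n)).
by rewrite !bump0 (cf_pi (le_m_trans (i:=i.+2) h (ltn_ord i))) /= mul0r.
Qed.

Lemma cf_exp_pi i n : le_m m n -> cf (tps_exp (tps_pi R m) i) n = (n == i)%:R.
Proof.
elim: i n => [|i IH] n h; first by rewrite /tps_exp /= cf_one.
rewrite /tps_exp iterS -/(tps_exp _ i) cf_mul //.
case: n h => [|n] h.
  by rewrite big_ord1 cf_pi //= mul0r.
rewrite big_ord_recl /= cf_pi ?le_m0 //= mul0r !add0r.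
rewrite big_ord_recl big1 /= => [|j _].
  rewrite !bump0 subSS subn0 cf_pi ?(le_m_trans h (isT : (1 <= n.+1)%N)) //= mul1r addr0.
  by rewrite IH // (le_m_trans h (leqnSn n)).
by rewrite !bump0 (cf_pi (le_m_trans (i:=j.+2) h (ltn_ord j))) /= mul0r.
Qed.

Lemma ev0D (a b : A) : cf (tps_add a b) 0 = cf a 0 + cf b 0.
Proof. exact: cf_add (le_m0 m). Qed.
Lemma ev0M (a b : A) : cf (tps_mul a b) 0 = cf a 0 * cf b 0.
Proof. by rewrite cf_mul ?le_m0 // big_ord1. Qed.
Lemma ev01 : cf (tps_one R m) 0 = 1.
Proof. by rewrite cf_one ?le_m0. Qed.
Lemma ev0_const (c : R) : cf (tps_const m c) 0 = c.
Proof. by rewrite cf_const ?le_m0. Qed.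
End TPSL.

Lemma qpB (R : comPzRingType) (S : R -> Prop) : zmod_morphism (quot_pi S).
Proof. by move=> x y; rewrite qpD qpN. Qed.
Definition qpm (R : comPzRingType) (S : R -> Prop) : {rmorphism R -> quot_by S} :=
  mkrm (@qpB R S) (qp1 S, @qpM R S).

Section MainL.
Variables (k : comPzRingType) (m : option nat).
Local Notation A := (tps k m).
Local Notation addA := (@tps_add k m).
Local Notation mulA := (@tps_mul k m).
Local Notation oneA := (@tps_one k m).
Local Notation ddA := (hs_dd addA mulA oneA m).
Local Notation cf := (@tps_coef k m).
Local Notation qJ := (qJ k m).

Lemma dd_zero n : ddA (tps_const m 0) n = 0.
Proof.
case h: (le_m m n); last by rewrite dd_out ?h.
have := ddD addA mulA oneA (tps_const m 0) (tps_const m 0) h.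
rewrite -constD addr0 => e; apply: (@addrI _ (ddA (tps_const m 0) n)).
by rewrite addr0 -e.
Qed.

Lemma ddA_one n : ddA oneA n = (n == 0)%:R.
Proof.
case h: (le_m m n); last first.
  rewrite dd_out ?h //; case: n h => //; by rewrite le_m0.
elim: n {-2}n (leqnn n) h => [|N IH] n.
  by rewrite leqn0 => /eqP -> _; rewrite dd1.
case: n => [_ _|n]; first by rewrite dd1.
rewrite ltnS => hn h.
have := ddM addA mulA oneA oneA oneA h; rewrite mul_one.
rewrite big_ord_recl big_ord_recr /= big1 => [|i _]; last first.
  rewrite !bump0 IH /=; first by rewrite mul0r.
    exact: leq_trans (ltn_ord i) hn.
  exact: (le_m_trans (i:=i.+1) h (leq_trans (ltn_ord i) (leqnSn n))).
rewrite subn0 bump0 subnn dd1 mul1r mulr1 add0r .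
move=> e; apply: (@addrI _ (ddA oneA n.+1)); by rewrite addr0 -e.
Qed.

Lemma ddA_const_nat (c : nat) n : ddA (tps_const m c%:R) n = c%:R * (n == 0)%:R.
Proof.
case h: (le_m m n); last first.
  rewrite dd_out ?h //; case: n h => [|n] h; first by rewrite le_m0 in h.
  by rewrite mulr0.
elim: c => [|c IH]; first by rewrite dd_zero mul0r.
by rewrite mulrS constD ddD // const1 ddA_one IH mulrS mulrDl mul1r.
Qed.

Lemma qJD x y : qJ (x + y) = qJ x + qJ y. Proof. exact: qpD. Qed.
Lemma qJM x y : qJ (x * y) = qJ x * qJ y. Proof. exact: qpM. Qed.
Lemma qJ1 : qJ 1 = 1. Proof. exact: qp1. Qed.
Lemma qJN x : qJ (- x) = - qJ x. Proof. exact: qpN. Qed.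
Lemma qJ_sum (I : Type) (r : seq I) (P : pred I) (F : I -> HSA k m) :
  qJ (\sum_(i <- r | P i) F i) = \sum_(i <- r | P i) qJ (F i).
Proof. exact: (big_morph _ qJD (qp0 _)). Qed.

Lemma qJ_gen n i : le_m m n -> qJ (ddA (tps_exp (tps_pi k m) i) n) = (n == i)%:R.
Proof.
move=> h; have := @qp_gen _ (Jgen k m) (ddA (tps_exp (tps_pi k m) i) n - (n == i)%:R).
rewrite qpD qpN => H; apply/eqP; rewrite -subr_eq0; apply/eqP.
rewrite -[X in _ - X](rmorph_nat (qpm (Jgen k m))).
by apply: H; exists n, i.
Qed.

Lemma qJ_pi n : le_m m n -> qJ (ddA (tps_pi k m) n) = (n == 1)%:R.
Proof.
move=> h; have -> : tps_pi k m = tps_exp (tps_pi k m) 1 by rewrite /tps_exp /= mul_one.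
exact: qJ_gen.
Qed.

Lemma K1 (a : A) n : le_m m n ->
  qJ (ddA a n) = \sum_(i < n.+1) qJ (ddA (tps_const m (cf a i)) (n - i)).
Proof.
elim: n a => [|n IH] a h.
  rewrite big_ord1 subn0 {1}(tps_decomp a) ddD // qJD ddM // big_ord1 qJM.
  by rewrite qJ_pi // mul0r addr0.
rewrite {1}(tps_decomp a) ddD // qJD ddM // qJ_sum.
rewrite [in RHS]big_ord_recl subn0; congr (_ + _).
rewrite [LHS]big_ord_recl qJM qJ_pi ?le_m0 // mul0r add0r.
rewrite [LHS]big_ord_recl big1 => [|i _]; last first.
  by rewrite qJM /= !bump0 qJ_pi ?(le_m_trans (i:=i.+2) h (ltn_ord i)) //= mul0r.
rewrite /= !bump0 subSS subn0 qJM qJ_pi ?(le_m_trans (i:=1) h (isT : (1 <= n.+1)%N)) //.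
rewrite mul1r addr0 IH ?(le_m_trans h (leqnSn n)) //.
apply: eq_bigr => i _; rewrite !bump0 subSS cf_trunc //.
exact: (le_m_trans (i:=i) (le_m_trans h (leqnSn n)) (ltnSE (ltn_ord i))).
Qed.
End MainL.

Section G.
Variables (p : nat) (k : comPzRingType) (m : option nat).
Hypotheses (pp : prime p) (pk : (p%:R : k) = 0).
Local Notation A := (tps k m).
Local Notation addA := (@tps_add k m).
Local Notation mulA := (@tps_mul k m).
Local Notation oneA := (@tps_one k m).
Local Notation ddA := (hs_dd addA mulA oneA m).
Local Notation ddk := (hs_dd +%R *%R (1 : k) m).
Local Notation cfA := (@tps_coef k m).
Local Notation cfO := (@tps_coef 'F_p m).
Local Notation ddO := (hs_dd (@tps_add 'F_p m) (@tps_mul 'F_p m) (@tps_one 'F_p m) m).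
Local Notation qJ := (qJ k m).
Local Notation iota := (hs_iota k m).

Lemma iota_pi q : iota (quot_pi _ q) =
  peval (fun i : hsidx k m => ddA (tps_const m (val i).1) (val i).2) q.
Proof. exact: (hs_map_pi (@constD k m) (@constM k m) (@const1 k m)). Qed.
Lemma iota_dd a n : iota (ddk a n) = if le_m m n then ddA (tps_const m a) n else 0.
Proof. exact: (hs_map_dd m (@constD k m) (@constM k m) (@const1 k m)). Qed.
Lemma iotaD x y : iota (x + y) = iota x + iota y.
Proof. exact: (hs_mapD (@constD k m) (@constM k m) (@const1 k m)). Qed.
Lemma iotaM x y : iota (x * y) = iota x * iota y.
Proof. exact: (hs_mapM (@constD k m) (@constM k m) (@const1 k m)). Qed.
Lemma iota1 : iota 1 = 1.
Proof. exact: (hs_map1 m (@constD k m) (@constM k m) (@const1 k m)). Qed.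

Definition ev0 (a : A) : k := cfA a 0.
Lemma ev0D' (a b : A) : ev0 (addA a b) = ev0 a + ev0 b. Proof. exact: ev0D. Qed.
Lemma ev0M' (a b : A) : ev0 (mulA a b) = ev0 a * ev0 b. Proof. exact: ev0M. Qed.
Lemma ev01' : ev0 oneA = 1. Proof. exact: ev01. Qed.
Definition rret := @hs_map A addA mulA oneA k +%R *%R 1 m ev0.
Lemma rretD x y : rret (x + y) = rret x + rret y.
Proof. exact: (hs_mapD ev0D' ev0M' ev01'). Qed.
Lemma rretM x y : rret (x * y) = rret x * rret y.
Proof. exact: (hs_mapM ev0D' ev0M' ev01'). Qed.
Lemma rret1 : rret 1 = 1.
Proof. exact: (hs_map1 m ev0D' ev0M' ev01'). Qed.
Lemma rret_dd a n : rret (ddA a n) = if le_m m n then ddk (ev0 a) n else 0.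
Proof. exact: (hs_map_dd m ev0D' ev0M' ev01'). Qed.

Lemma HS_pi (T : choiceType) add mul (one : T) q :
  quot_pi (hs_rel add mul one (m:=m)) q =
  peval (fun i : hsidx T m => hs_dd add mul one m (val i).1 (val i).2) q.
Proof.
rewrite -{1}(peval_id q) (peval_comp (@qpD _ _) (@qpM _ _) (qp1 _)).
by apply: eq_peval => i; rewrite /hs_dd hs_d_val.
Qed.

Lemma rret_iota x : rret (iota x) = x.
Proof.
rewrite -[x]qpK iota_pi (peval_comp rretD rretM rret1) HS_pi.
apply: eq_peval => i; rewrite rret_dd (valP i) /ev0 ev0_const.
done.
Qed.

Lemma iota_inj : injective iota.
Proof. by move=> x y e; rewrite -[x]rret_iota -[y]rret_iota e. Qed.

Lemma rho_surj y : exists x, hs_rho k m x = y.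
Proof.
rewrite -(qpK y) -(qpK (repr y)); set q := repr (repr y).
exists (peval (fun i : hsidx A m =>
  \sum_(j < (val i).2.+1) ddk (cfA (val i).1 j) ((val i).2 - j)) q).
suff H : qJ (iota (peval (fun i : hsidx A m =>
  \sum_(j < (val i).2.+1) ddk (cfA (val i).1 j) ((val i).2 - j)) q)) = qJ (quot_pi _ q).
  exact: H.
rewrite HS_pi (peval_comp iotaD iotaM iota1) !(peval_comp (@qJD k m) (@qJM k m) (@qJ1 k m)).
apply: eq_peval => i; rewrite (K1 _ (valP i)).
rewrite (big_morph _ iotaD (f0 iotaD)) qJ_sum; apply: eq_bigr => j _.
by rewrite iota_dd (le_m_trans (valP i) (leq_subr _ _)).
Qed.

Local Notation OA := (O_to_A p k m).

Lemma OA_D a b : OA (tps_add a b) = tps_add (OA a) (OA b).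
Proof.
apply: tps_ext => n h; rewrite cf_add // !cf_trunc //.
exact: (fprD pp pk).
Qed.

Lemma OA_M a b : OA (tps_mul a b) = tps_mul (OA a) (OA b).
Proof.
apply: tps_ext => n h; rewrite cf_mul // !cf_trunc //.
rewrite -[Fp_to_k p k _]/(fprm pp pk _) rmorph_sum; apply: eq_bigr => i _.
rewrite rmorphM !cf_trunc ?(le_m_trans h (ltnSE (ltn_ord i))) ?(le_m_trans h (leq_subr _ _)) //.
Qed.

Lemma OA_1 : OA (tps_one 'F_p m) = tps_one k m.
Proof.
apply: tps_ext => n h; rewrite cf_trunc // !cf_one //.
exact: (fpr_nat pp pk).
Qed.

Lemma OA_exp i : OA (tps_exp (tps_pi 'F_p m) i) = tps_exp (tps_pi k m) i.
Proof.
apply: tps_ext => n h; rewrite cf_trunc // !cf_exp_pi //.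
exact: (fpr_nat pp pk).
Qed.

Lemma to_pi q : HSO_to_HSA p k m (quot_pi _ q) =
  peval (fun i : hsidx (tps 'F_p m) m => ddA (OA (val i).1) (val i).2) q.
Proof. exact: (hs_map_pi OA_D OA_M OA_1). Qed.
Lemma to_dd a n : HSO_to_HSA p k m (ddO a n) = if le_m m n then ddA (OA a) n else 0.
Proof. exact: (hs_map_dd m OA_D OA_M OA_1). Qed.
Lemma aug_pi q : HSO_aug p m (quot_pi _ q) =
  peval (fun i : hsidx (tps 'F_p m) m => cfO (val i).1 (val i).2) q.
Proof. exact: (hlift_pi (@cf_add 'F_p m) (@cf_mul 'F_p m) (@ev01 'F_p m)). Qed.
Lemma aug_dd a n : HSO_aug p m (ddO a n) = if le_m m n then cfO a n else 0.
Proof. exact: (hlift_dd (@cf_add 'F_p m) (@cf_mul 'F_p m) (@ev01 'F_p m)). Qed.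

Lemma pJ : (p%:R : HSAJ k m) = 0.
Proof.
rewrite -(rmorph_nat (qpm (Jgen k m))) mkrmE.
have -> : (p%:R : HSA k m) = ddA (tps_const m p%:R) 0 by rewrite ddA_const_nat /= mulr1.
by rewrite pk dd_zero qp0.
Qed.

Lemma compatJ c : qJ (HSO_to_HSA p k m c) = fprm pp pJ (HSO_aug p m c).
Proof.
rewrite -[c]qpK to_pi aug_pi.
rewrite (peval_comp (@qJD k m) (@qJM k m) (@qJ1 k m)) (peval_rmorph (fprm pp pJ)).
apply: eq_peval => i; have h : le_m m (sval i).2 := valP i.
rewrite (K1 _ h) big_ord_recr big1 => [|j _] /=.
  rewrite add0r subnn h ddA_const_nat /= mulr1.
  by rewrite -[RHS](rmorph_nat (qpm (Jgen k m))).
have hj : le_m m j by exact: (le_m_trans h (ltnW (ltn_ord j))).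
rewrite hj ddA_const_nat subn_eq0 leqNgt ltn_ord /= mulr0.
exact: qp0.
Qed.
End G.

Theorem proposition6p2 (p : nat) (k : comPzRingType) (m : option nat) :
  prime p -> (p%:R : k) = 0 ->
  [/\ injective (hs_iota k m),
      (forall y : HSAJ k m, exists x : HSk k m, hs_rho k m x = y) &
      forall (T : comPzRingType) (u : {rmorphism HSA k m -> T})
             (v : {rmorphism 'F_p -> T}),
        is_pushout (HSO_to_HSA p k m) (HSO_aug p m) u v ->
        exists (phi : {rmorphism T -> HSAJ k m}) (psi : {rmorphism HSAJ k m -> T}),
          [/\ cancel phi psi, cancel psi phi,
              (forall c, phi (u c) = qJ k m c) & (forall c, psi (qJ k m c) = u c)]].
Proof.
move=> pp pk; split; [exact: iota_inj | exact: rho_surj |].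
move=> T u v [compat univ].
have [h [hu hv huniq]] := univ (HSAJ k m) (qpm (Jgen k m)) (fprm pp (pJ m pk))
  (compatJ pp pk).
have ukill : forall s, Jgen k m s -> u s = 0.
  move=> s [n [i [hn ->]]].
  have e : hs_dd (@tps_add k m) (@tps_mul k m) (@tps_one k m) m
      (tps_exp (tps_pi k m) i) n =
    HSO_to_HSA p k m (hs_dd (@tps_add 'F_p m) (@tps_mul 'F_p m) (@tps_one 'F_p m) m
      (tps_exp (tps_pi 'F_p m) i) n).
    by rewrite (to_dd pp pk) hn (OA_exp m pp pk).
  by rewrite rmorphB rmorph_nat e compat aug_dd hn cf_exp_pi // rmorph_nat subrr.
pose psif (y : HSAJ k m) : T := u (repr y).
have psi_pi x : psif (qJ k m x) = u x.
  exact: (repr_kill (rmorphD u) (rmorphM u) ukill x).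
have psiB : zmod_morphism psif.
  move=> x y; rewrite -[x]qpK -[y]qpK -/(qJ k m _) -/(qJ k m _).
  by rewrite -qJN -qJD !psi_pi rmorphB.
have psiM : {morph psif : x y / x * y}.
  move=> x y; rewrite -[x]qpK -[y]qpK -/(qJ k m _) -/(qJ k m _).
  by rewrite -qJM !psi_pi rmorphM.
have psi1 : psif 1 = 1 by rewrite -(qJ1 k m) psi_pi rmorph1.
pose psi := mkrm psiB (psi1, psiM).
exists h, psi; split.
- move=> t.
  have [h0 [_ _ uniq0]] := univ T u v compat.
  have cB : zmod_morphism (fun t => psi (h t)) by move=> x y; rewrite !rmorphB.
  have cM : monoid_morphism (fun t => psi (h t)).
    by split; [rewrite !rmorph1 | move=> x y; rewrite !rmorphM].
  have iB : zmod_morphism (fun t : T => t) by [].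
  have iM : monoid_morphism (fun t : T => t) by [].
  have E1 : forall t, psi (h t) = h0 t.
    apply: (uniq0 (mkrm cB cM)) => [b|d]; rewrite mkrmE.
      by rewrite hu mkrmE psi_pi.
    rewrite hv mkrmE /= -[in RHS](natr_Zp d) rmorph_nat.
    by rewrite /fpr -[psif _]/(psi _) rmorph_nat.
  have E2 : forall t, t = h0 t by apply: (uniq0 (mkrm iB iM)).
  by rewrite E1 -E2.
- move=> y; rewrite -[y]qpK -/(qJ k m _) mkrmE psi_pi hu.
  by [].
- by move=> c; rewrite hu.
- by move=> c; rewrite mkrmE psi_pi.
Qed.
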